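(* Let $\lambda_0,\lambda\in\{-1,0,1\}$. Let $M_0$ be a Riemann surface of constant Gauss curvature $K_0=-\lambda_0$ with local complex coordinate $z$, complexified coframe $e_0=\frac{2\,dz}{1+K_0|z|^2}$, spin connection $\Gamma_0=iK_0\frac{z\,d\bar z-\bar z\,dz}{1+K_0|z|^2}$ and Kähler form $\omega_0=\frac{i}{2}e_0\wedge\bar e_0$; let $M$ be a Riemann surface of constant Gauss curvature $K=-\lambda$ with coframe $e$, spin connection $\Gamma$ given by the same formulas with $K$ in place of $K_0$, and let $\hat A=-\Gamma t_0+\frac i2(e\,t_--\bar e\,t_+)$. Let $f:M_0\to M$ be holomorphic, and define a complex function $\phi$ and a real one-form $a$ on $M_0$ by $f^*e=\phi\, e_0$ and $a=f^*\Gamma-\Gamma_0$. Then $$f^*\hat A=-(a+\Gamma_0)\,t_0+\frac{i}{2}\left(\phi\, e_0\, t_- -\bar\phi\,\bar e_0\, t_+\right),$$ and, for a complex function $\phi$ and real one-form $a$ on $M_0$, the $\mathrm{Lie}(\mathbb{H}^1_\lambda)$-valued connection $-(a+\Gamma_0)t_0+\frac{i}{2}(\phi e_0 t_--\bar\phi\bar e_0 t_+)$ is flat if and only if $(\phi,a)$ satisfies the $(\lambda_0,\lambda)$ vortex equations $$(d\phi-ia\phi)\wedge e_0=0,\qquad da=(\lambda_0-\lambda|\phi|^2)\,\omega_0 .$$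
   Context: $\mathbb{H}^1_\lambda$ is the matrix group $\left\{\begin{pmatrix} z_1&\lambda\bar z_2\\ z_2&\bar z_1\end{pmatrix}: |z_1|^2-\lambda|z_2|^2=1\right\}$ with Lie algebra basis $t_0=-\frac{i}{2}\begin{pmatrix}1&0\\0&-1\end{pmatrix}$, $t_1=-\frac{i}{2}\begin{pmatrix}0&-\lambda\\1&0\end{pmatrix}$, $t_2=\frac12\begin{pmatrix}0&\lambda\\1&0\end{pmatrix}$, $t_\pm=t_1\pm it_2$. Flatness of a Lie-algebra-valued one-form $B$ means $dB+B\wedge B=0$. *)

(* Defs.v *)
From Stdlib Require Import Reals.
From Coquelicot Require Import Coquelicot.
Open Scope R_scope.

Record M2 := mkM2 { m11 : C; m12 : C; m21 : C; m22 : C }.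

Definition M2zero : M2 := mkM2 0%C 0%C 0%C 0%C.
Definition M2add (A B : M2) : M2 :=
  mkM2 (m11 A + m11 B)%C (m12 A + m12 B)%C (m21 A + m21 B)%C (m22 A + m22 B)%C.
Definition M2scal (c : C) (A : M2) : M2 :=
  mkM2 (c * m11 A)%C (c * m12 A)%C (c * m21 A)%C (c * m22 A)%C.
Definition M2opp (A : M2) : M2 := M2scal (-1)%C A.
Definition M2sub (A B : M2) : M2 := M2add A (M2opp B).
Definition M2mul (A B : M2) : M2 :=
  mkM2 (m11 A * m11 B + m12 A * m21 B)%C (m11 A * m12 B + m12 A * m22 B)%C
       (m21 A * m11 B + m22 A * m21 B)%C (m21 A * m12 B + m22 A * m22 B)%C.

(** * Basis of Lie(H^1_lambda) *)
Definition t0 (l : R) : M2 := M2scal (- (Ci / 2))%C (mkM2 1%C 0%C 0%C (-1)%C).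
Definition t1 (l : R) : M2 := M2scal (- (Ci / 2))%C (mkM2 0%C (RtoC (- l)) 1%C 0%C).
Definition t2 (l : R) : M2 := M2scal (/ 2)%C (mkM2 0%C (RtoC l) 1%C 0%C).
Definition tplus (l : R) : M2 := M2add (t1 l) (M2scal Ci (t2 l)).
Definition tminus (l : R) : M2 := M2sub (t1 l) (M2scal Ci (t2 l)).

Definition px (g : C -> C) (z : C) : C :=
  (Derive (fun t => Re (g (t, Im z))) (Re z), Derive (fun t => Im (g (t, Im z))) (Re z)).
Definition py (g : C -> C) (z : C) : C :=
  (Derive (fun t => Re (g (Re z, t))) (Im z), Derive (fun t => Im (g (Re z, t))) (Im z)).
Definition pxM (g : C -> M2) (z : C) : M2 :=
  mkM2 (px (fun w => m11 (g w)) z) (px (fun w => m12 (g w)) z)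
       (px (fun w => m21 (g w)) z) (px (fun w => m22 (g w)) z).
Definition pyM (g : C -> M2) (z : C) : M2 :=
  mkM2 (py (fun w => m11 (g w)) z) (py (fun w => m12 (g w)) z)
       (py (fun w => m21 (g w)) z) (py (fun w => m22 (g w)) z).

Definition has_partials_on (U : C -> Prop) (g : C -> C) : Prop :=
  forall z, U z ->
    ex_derive (fun t => Re (g (t, Im z))) (Re z) /\
    ex_derive (fun t => Im (g (t, Im z))) (Re z) /\
    ex_derive (fun t => Re (g (Re z, t))) (Im z) /\
    ex_derive (fun t => Im (g (Re z, t))) (Im z).

(** * Differential forms on a planar coordinate domain.
    A 1-form is  fdx * dx + fdy * dy ; a 2-form is given by its coefficient
    of dx /\ dy (a function C -> V). *)
Record form1 (V : Type) := mkF { fdx : C -> V; fdy : C -> V }.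
Arguments mkF {V} _ _.
Arguments fdx {V} _ _.
Arguments fdy {V} _ _.

Definition cform := form1 C.
Definition mform := form1 M2.

Definition dz : cform := @mkF C (fun _ => 1%C) (fun _ => Ci).
Definition dzbar : cform := @mkF C (fun _ => 1%C) (fun _ => (- Ci)%C).
Definition cadd (a b : cform) : cform :=
  @mkF C (fun z => fdx a z + fdx b z)%C (fun z => fdy a z + fdy b z)%C.
Definition copp (a : cform) : cform :=
  @mkF C (fun z => - fdx a z)%C (fun z => - fdy a z)%C.
Definition csub (a b : cform) : cform := cadd a (copp b).
Definition fmul (g : C -> C) (a : cform) : cform :=
  @mkF C (fun z => g z * fdx a z)%C (fun z => g z * fdy a z)%C.
Definition cconj (a : cform) : cform :=
  @mkF C (fun z => Cconj (fdx a z)) (fun z => Cconj (fdy a z)).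
Definition dfun (g : C -> C) : cform := @mkF C (px g) (py g).
Definition d1 (a : cform) (z : C) : C := (px (fdy a) z - py (fdx a) z)%C.
Definition wedge (a b : cform) (z : C) : C :=
  (fdx a z * fdy b z - fdy a z * fdx b z)%C.
Definition rform (ax ay : C -> R) : cform :=
  @mkF C (fun z => RtoC (ax z)) (fun z => RtoC (ay z)).

Definition ftimesM (a : cform) (T : M2) : mform :=
  @mkF M2 (fun z => M2scal (fdx a z) T) (fun z => M2scal (fdy a z) T).
Definition madd (A B : mform) : mform :=
  @mkF M2 (fun z => M2add (fdx A z) (fdx B z)) (fun z => M2add (fdy A z) (fdy B z)).
Definition mscal (c : C) (A : mform) : mform :=
  @mkF M2 (fun z => M2scal c (fdx A z)) (fun z => M2scal c (fdy A z)).
Definition msub (A B : mform) : mform := madd A (mscal (-1)%C B).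
Definition dM (A : mform) (z : C) : M2 := M2sub (pxM (fdy A) z) (pyM (fdx A) z).
Definition wedgeM (A B : mform) (z : C) : M2 :=
  M2sub (M2mul (fdx A z) (fdy B z)) (M2mul (fdy A z) (fdx B z)).

Definition flat_on (U : C -> Prop) (B : mform) : Prop :=
  forall z, U z -> M2add (dM B z) (wedgeM B B z) = M2zero.

Definition cform_eq_on (U : C -> Prop) (a b : cform) : Prop :=
  forall z, U z -> fdx a z = fdx b z /\ fdy a z = fdy b z.
Definition mform_eq_on (U : C -> Prop) (A B : mform) : Prop :=
  forall z, U z -> fdx A z = fdx B z /\ fdy A z = fdy B z.

(** Pullback of forms by a (real-differentiable) map f : C -> C, viewed as
    a map (x,y) |-> (Re f, Im f). *)
Definition pull (f : C -> C) (a : cform) : cform :=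
  @mkF C (fun z => fdx a (f z) * RtoC (Re (px f z)) + fdy a (f z) * RtoC (Im (px f z)))%C
      (fun z => fdx a (f z) * RtoC (Re (py f z)) + fdy a (f z) * RtoC (Im (py f z)))%C.
Definition pullM (f : C -> C) (A : mform) : mform :=
  @mkF M2 (fun z => M2add (M2scal (RtoC (Re (px f z))) (fdx A (f z)))
                      (M2scal (RtoC (Im (px f z))) (fdy A (f z))))
      (fun z => M2add (M2scal (RtoC (Re (py f z))) (fdx A (f z)))
                      (M2scal (RtoC (Im (py f z))) (fdy A (f z)))).

Definition confac (K : R) (z : C) : R := 1 + K * (Cmod z) ^ 2.
Definition coframe (K : R) : cform :=
  fmul (fun z => RtoC (2 / confac K z)) dz.
Definition spin (K : R) : cform :=
  fmul (fun z => (Ci * RtoC K / RtoC (confac K z))%C)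
       (csub (fmul (fun z => z) dzbar) (fmul Cconj dz)).
Definition kahler (K : R) (z : C) : C :=
  (Ci / 2 * wedge (coframe K) (cconj (coframe K)) z)%C.

Definition Ahat (l : R) : mform :=
  madd (ftimesM (copp (spin (- l))) (t0 l))
       (mscal (Ci / 2)%C (msub (ftimesM (coframe (- l)) (tminus l))
                               (ftimesM (cconj (coframe (- l))) (tplus l)))).

Definition vortex_conn (l0 l : R) (a : cform) (phi : C -> C) : mform :=
  madd (ftimesM (copp (cadd a (spin (- l0)))) (t0 l))
       (mscal (Ci / 2)%C
          (msub (ftimesM (fmul phi (coframe (- l0))) (tminus l))
                (ftimesM (fmul (fun z => Cconj (phi z)) (cconj (coframe (- l0)))) (tplus l)))).

Definition vortex_eqs (U : C -> Prop) (l0 l : R) (phi : C -> C) (a : cform) : Prop :=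
  forall z, U z ->
    wedge (csub (dfun phi) (fmul (fun w => (Ci * phi w)%C) a)) (coframe (- l0)) z = 0%C /\
    d1 a z = (RtoC (l0 - l * (Cmod (phi z)) ^ 2) * kahler (- l0) z)%C.

Definition holomorphic_on (U : C -> Prop) (f : C -> C) : Prop :=
  forall z, U z -> @ex_derive C_AbsRing C_NormedModule f z.

Definition unit_val (l : R) : Prop := l = -1 \/ l = 0 \/ l = 1.

(* Main.v *)
Require Import Defs.
From Stdlib Require Import Reals Lra.
From Coquelicot Require Import Coquelicot.
Open Scope R_scope.


Lemma exR_plus (f g : R -> R) x : ex_derive f x -> ex_derive g x -> ex_derive (fun s => f s + g s) x.
Proof. intros; apply (ex_derive_plus (K:=R_AbsRing) (V:=R_NormedModule) f g); auto. Qed.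
Lemma exR_minus (f g : R -> R) x : ex_derive f x -> ex_derive g x -> ex_derive (fun s => f s - g s) x.
Proof. intros; apply (ex_derive_minus (K:=R_AbsRing) (V:=R_NormedModule) f g); auto. Qed.
Lemma exR_opp (f : R -> R) x : ex_derive f x -> ex_derive (fun s => - f s) x.
Proof. intros; apply (ex_derive_opp (K:=R_AbsRing) (V:=R_NormedModule) f); auto. Qed.

Definition Dc (h : R -> C) (t : R) : C :=
  (Derive (fun s => fst (h s)) t, Derive (fun s => snd (h s)) t).
Definition exD (h : R -> C) (t : R) : Prop :=
  ex_derive (fun s => fst (h s)) t /\ ex_derive (fun s => snd (h s)) t.

Lemma Dc_ext f g t : (forall s, f s = g s) -> Dc f t = Dc g t.
Proof. intro H. unfold Dc. rewrite (Derive_ext (fun s => fst (f s)) (fun s => fst (g s))) by (intro; now rewrite H).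
rewrite (Derive_ext (fun s => snd (f s)) (fun s => snd (g s))) by (intro; now rewrite H). reflexivity. Qed.

Lemma exD_mult f g t : exD f t -> exD g t -> exD (fun s => (f s * g s)%C) t.
Proof. intros [H1 H2] [H3 H4]. split; simpl.
- apply exR_minus; apply ex_derive_mult; auto.
- apply exR_plus; apply ex_derive_mult; auto.
Qed.

Lemma Dc_mult f g t : exD f t -> exD g t ->
  Dc (fun s => (f s * g s)%C) t = (Dc f t * g t + f t * Dc g t)%C.
Proof. intros [H1 H2] [H3 H4]. unfold Dc; simpl.
rewrite Derive_minus; try (apply ex_derive_mult; auto).
rewrite Derive_plus; try (apply ex_derive_mult; auto).
rewrite !Derive_mult; auto.
apply injective_projections; simpl; ring.
Qed.

Lemma exD_plus f g t : exD f t -> exD g t -> exD (fun s => (f s + g s)%C) t.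
Proof. intros [H1 H2] [H3 H4]. split; simpl; apply exR_plus; auto. Qed.

Lemma Dc_plus f g t : exD f t -> exD g t ->
  Dc (fun s => (f s + g s)%C) t = (Dc f t + Dc g t)%C.
Proof. intros [H1 H2] [H3 H4]. unfold Dc; simpl.
rewrite !Derive_plus; auto. Qed.

Lemma exD_const c t : exD (fun _ => c) t.
Proof. split; apply ex_derive_const. Qed.

Lemma Dc_const c t : Dc (fun _ => c) t = 0%C.
Proof. unfold Dc. rewrite !Derive_const. reflexivity. Qed.

Lemma exD_conj f t : exD f t -> exD (fun s => Cconj (f s)) t.
Proof. intros [H1 H2]. split; simpl; auto. apply exR_opp; auto. Qed.

Lemma Dc_conj f t : Dc (fun s => Cconj (f s)) t = Cconj (Dc f t).
Proof. unfold Dc; simpl. rewrite Derive_opp. reflexivity. Qed.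

Lemma confac_eq K a b : confac K (a, b) = 1 + K * (a^2 + b^2).
Proof. unfold confac, Cmod. change (fst (a,b)) with a; change (snd (a,b)) with b. rewrite pow2_sqrt; [reflexivity|]. nra. Qed.

Lemma Cinv_RtoC r : Cinv (RtoC r) = RtoC (/ r).
Proof. unfold Cinv, RtoC; simpl. destruct (Req_dec r 0) as [->|H].
- rewrite Rinv_0. apply injective_projections; simpl; unfold Rdiv; try rewrite Rmult_0_l; try ring_simplify; try rewrite Rinv_0; ring.
- apply injective_projections; simpl; field; auto.
Qed.

Lemma spin_x K w : fdx (spin K) w = (RtoC (-2*K) * RtoC (Im w * / confac K w))%C.
Proof. destruct w as [a b]. unfold spin, fmul, csub, cadd, copp, dzbar, dz; simpl.
unfold Cdiv. rewrite Cinv_RtoC. set (ic := / confac K (a,b)).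
apply injective_projections; simpl; ring. Qed.

Lemma spin_y K w : fdy (spin K) w = (RtoC (2*K) * RtoC (Re w * / confac K w))%C.
Proof. destruct w as [a b]. unfold spin, fmul, csub, cadd, copp, dzbar, dz; simpl.
unfold Cdiv. rewrite Cinv_RtoC. set (ic := / confac K (a,b)).
apply injective_projections; simpl; ring. Qed.

Lemma exD_RtoC r x : ex_derive r x -> exD (fun t => RtoC (r t)) x.
Proof. intro H; split; simpl; auto. apply ex_derive_const. Qed.
Lemma Dc_RtoC r x : Dc (fun t => RtoC (r t)) x = RtoC (Derive r x).
Proof. unfold Dc; simpl. rewrite Derive_const. reflexivity. Qed.

Lemma Dc_RtoC' r x d : is_derive r x d -> Dc (fun t => RtoC (r t)) x = RtoC d.
Proof. intro H. rewrite Dc_RtoC. now rewrite (is_derive_unique _ _ _ H). Qed.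
Lemma exD_RtoC' r x d : is_derive r x d -> exD (fun t => RtoC (r t)) x.
Proof. intro H. apply exD_RtoC. eexists; eauto. Qed.

Section Expl.
Variables K x y : R.
Hypothesis Hc : 1 + K * (x^2 + y^2) <> 0.
Let c := 1 + K * (x^2 + y^2).

Lemma der_h1x : is_derive (fun t => / confac K (t, y)) x (- (2 * K * x) / c ^ 2).
Proof. apply is_derive_ext with (fun t => / (1 + K * (t^2 + y^2))).
intro; now rewrite confac_eq. unfold c in *. auto_derive; [exact Hc| field; exact Hc]. Qed.
Lemma der_h1y : is_derive (fun t => / confac K (x, t)) y (- (2 * K * y) / c ^ 2).
Proof. apply is_derive_ext with (fun t => / (1 + K * (x^2 + t^2))).
intro; now rewrite confac_eq. unfold c in *. auto_derive; [exact Hc| field; exact Hc]. Qed.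
Lemma der_hxx : is_derive (fun t => t * / confac K (t, y)) x ((c - 2 * K * x^2) / c ^ 2).
Proof. apply is_derive_ext with (fun t => t * / (1 + K * (t^2 + y^2))).
intro; now rewrite confac_eq. unfold c in *. auto_derive; [exact Hc| field; exact Hc]. Qed.
Lemma der_hxy : is_derive (fun t => x * / confac K (x, t)) y (- (2 * K * x * y) / c ^ 2).
Proof. apply is_derive_ext with (fun t => x * / (1 + K * (x^2 + t^2))).
intro; now rewrite confac_eq. unfold c in *. auto_derive; [exact Hc| field; exact Hc]. Qed.
Lemma der_hyx : is_derive (fun t => y * / confac K (t, y)) x (- (2 * K * x * y) / c ^ 2).
Proof. apply is_derive_ext with (fun t => y * / (1 + K * (t^2 + y^2))).
intro; now rewrite confac_eq. unfold c in *. auto_derive; [exact Hc| field; exact Hc]. Qed.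
Lemma der_hyy : is_derive (fun t => t * / confac K (x, t)) y ((c - 2 * K * y^2) / c ^ 2).
Proof. apply is_derive_ext with (fun t => t * / (1 + K * (x^2 + t^2))).
intro; now rewrite confac_eq. unfold c in *. auto_derive; [exact Hc| field; exact Hc]. Qed.
End Expl.

Section Entries.
Variables (l0 l : R) (phi : C -> C) (ax ay : C -> R).
Let B := vortex_conn l0 l (rform ax ay) phi.
Let K := - l0.
Let h1 w := RtoC (/ confac K w).
Let hx w := RtoC (Re w * / confac K w).
Let hy w := RtoC (Im w * / confac K w).

Ltac ent w := unfold B, h1, hx, hy, K, vortex_conn, madd, mscal, msub, ftimesM, fmul, cadd, copp, cconj, coframe, rform, dz, t0, tminus, tplus, t1, t2, M2add, M2scal, M2sub, M2opp; cbn -[spin];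
  try rewrite spin_x; try rewrite spin_y; unfold Rdiv; 
  set (ic := / confac (- l0) w); destruct (phi w) as [p q]; destruct w as [a b];
  apply injective_projections; simpl; field.

Lemma Bx11 w : m11 (fdx B w) = (Ci / 2 * (RtoC (ax w) + RtoC (-2*K) * hy w))%C. Proof. ent w. Qed.
Lemma Bx22 w : m22 (fdx B w) = (- (Ci / 2 * (RtoC (ax w) + RtoC (-2*K) * hy w)))%C. Proof. ent w. Qed.
Lemma Bx21 w : m21 (fdx B w) = (phi w * h1 w)%C. Proof. ent w. Qed.
Lemma Bx12 w : m12 (fdx B w) = (RtoC l * (Cconj (phi w) * h1 w))%C. Proof. ent w. Qed.
Lemma By11 w : m11 (fdy B w) = (Ci / 2 * (RtoC (ay w) + RtoC (2*K) * hx w))%C. Proof. ent w. Qed.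
Lemma By22 w : m22 (fdy B w) = (- (Ci / 2 * (RtoC (ay w) + RtoC (2*K) * hx w)))%C. Proof. ent w. Qed.
Lemma By21 w : m21 (fdy B w) = (Ci * (phi w * h1 w))%C. Proof. ent w. Qed.
Lemma By12 w : m12 (fdy B w) = (- (Ci * RtoC l) * (Cconj (phi w) * h1 w))%C. Proof. ent w. Qed.
End Entries.

Lemma Dc_shape1 c f r t d : exD f t -> is_derive r t d ->
  Dc (fun s => (c * (f s * RtoC (r s)))%C) t = (c * (Dc f t * RtoC (r t) + f t * RtoC d))%C.
Proof. intros Hf Hr.
rewrite Dc_mult; [|apply exD_const|apply exD_mult; auto; eapply exD_RtoC'; eauto].
rewrite Dc_const, Dc_mult; auto; [|eapply exD_RtoC'; eauto].
rewrite (Dc_RtoC' _ _ _ Hr). ring. Qed.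

Lemma Dc_shape2 c k a r t d : exD a t -> is_derive r t d ->
  Dc (fun s => (c * (a s + RtoC k * RtoC (r s)))%C) t = (c * (Dc a t + RtoC k * RtoC d))%C.
Proof. intros Ha Hr.
assert (exD (fun s => RtoC (r s)) t) by (eapply exD_RtoC'; eauto).
rewrite Dc_mult; [|apply exD_const|apply exD_plus; auto; apply exD_mult; auto; apply exD_const].
rewrite Dc_const, Dc_plus; auto; [|apply exD_mult; auto; apply exD_const].
rewrite Dc_mult; auto; [|apply exD_const].
rewrite Dc_const, (Dc_RtoC' _ _ _ Hr). ring. Qed.

Lemma E21_expand (B : mform) z : m21 (M2add (dM B z) (wedgeM B B z)) =
  (Dc (fun t => m21 (fdy B (t, Im z))) (Re z) + (-1) * Dc (fun t => m21 (fdx B (Re z, t))) (Im z)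
   + ((m21 (fdx B z) * m11 (fdy B z) + m22 (fdx B z) * m21 (fdy B z))
      + (-1) * (m21 (fdy B z) * m11 (fdx B z) + m22 (fdy B z) * m21 (fdx B z))))%C.
Proof. reflexivity. Qed.
Lemma E12_expand (B : mform) z : m12 (M2add (dM B z) (wedgeM B B z)) =
  (Dc (fun t => m12 (fdy B (t, Im z))) (Re z) + (-1) * Dc (fun t => m12 (fdx B (Re z, t))) (Im z)
   + ((m11 (fdx B z) * m12 (fdy B z) + m12 (fdx B z) * m22 (fdy B z))
      + (-1) * (m11 (fdy B z) * m12 (fdx B z) + m12 (fdy B z) * m22 (fdx B z))))%C.
Proof. reflexivity. Qed.
Lemma E11_expand (B : mform) z : m11 (M2add (dM B z) (wedgeM B B z)) =
  (Dc (fun t => m11 (fdy B (t, Im z))) (Re z) + (-1) * Dc (fun t => m11 (fdx B (Re z, t))) (Im z)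
   + ((m11 (fdx B z) * m11 (fdy B z) + m12 (fdx B z) * m21 (fdy B z))
      + (-1) * (m11 (fdy B z) * m11 (fdx B z) + m12 (fdy B z) * m21 (fdx B z))))%C.
Proof. reflexivity. Qed.
Lemma E22_expand (B : mform) z : m22 (M2add (dM B z) (wedgeM B B z)) =
  (Dc (fun t => m22 (fdy B (t, Im z))) (Re z) + (-1) * Dc (fun t => m22 (fdx B (Re z, t))) (Im z)
   + ((m21 (fdx B z) * m12 (fdy B z) + m22 (fdx B z) * m22 (fdy B z))
      + (-1) * (m21 (fdy B z) * m12 (fdx B z) + m22 (fdy B z) * m22 (fdx B z))))%C.
Proof. reflexivity. Qed.

Lemma Cmod2 p q : Cmod (p, q) ^ 2 = p^2 + q^2.
Proof. unfold Cmod. change (fst (p,q)) with p; change (snd (p,q)) with q. rewrite pow2_sqrt; [reflexivity|]. nra. Qed.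

Section Main.
Variables (l0 l : R) (phi : C -> C) (ax ay : C -> R) (x y : R).
Hypothesis Hc : 1 + (- l0) * (x^2 + y^2) <> 0.
Hypothesis Hpx : exD (fun t => phi (t, y)) x.
Hypothesis Hpy : exD (fun t => phi (x, t)) y.
Hypothesis Hay : exD (fun t => RtoC (ay (t, y))) x.
Hypothesis Hax : exD (fun t => RtoC (ax (x, t))) y.
Let B := vortex_conn l0 l (rform ax ay) phi.
Let z : C := (x, y).
Let V := wedge (csub (dfun phi) (fmul (fun w => (Ci * phi w)%C) (rform ax ay))) (coframe (- l0)) z.
Let W := (Defs.d1 (rform ax ay) z - RtoC (l0 - l * Cmod (phi z) ^ 2) * kahler (- l0) z)%C.

Lemma E21_val : m21 (M2add (dM B z) (wedgeM B B z)) = (V / 2)%C.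
Proof.
rewrite E21_expand. unfold B, z; simpl Re; simpl Im.
rewrite (Dc_ext _ (fun t => (Ci * (phi (t, y) * RtoC (/ confac (- l0) (t, y))))%C) x) by (intro; apply By21).
rewrite (Dc_ext _ (fun t => (1 * (phi (x, t) * RtoC (/ confac (- l0) (x, t))))%C) y) by (intro; rewrite Bx21; ring).
rewrite (Dc_shape1 _ _ _ _ _ Hpx (der_h1x _ _ _ Hc)).
rewrite (Dc_shape1 _ _ _ _ _ Hpy (der_h1y _ _ _ Hc)).
rewrite Bx21, By11, Bx22, By21, Bx11, By22.
unfold V, wedge, csub, cadd, copp, fmul, dfun, rform, coframe, dz, z; simpl fdx; simpl fdy.
change (px phi (x, y)) with (Dc (fun t => phi (t, y)) x).
change (py phi (x, y)) with (Dc (fun t => phi (x, t)) y).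
simpl Re; simpl Im.
generalize (Dc (fun t => phi (t, y)) x) (Dc (fun t => phi (x, t)) y) (phi (x, y)).
intros [p1 q1] [p2 q2] [p q].
rewrite !confac_eq.
assert (Hc2 : 1 + - l0 * (x * x + y * y) <> 0) by (replace (x*x+y*y) with (x^2+y^2) by ring; auto).
apply injective_projections; simpl; field; auto.
Qed.

Lemma E12_val : m12 (M2add (dM B z) (wedgeM B B z)) = (RtoC l * Cconj V / 2)%C.
Proof.
rewrite E12_expand. unfold B, z; simpl Re; simpl Im.
rewrite (Dc_ext _ (fun t => ((- (Ci * RtoC l)) * (Cconj (phi (t, y)) * RtoC (/ confac (- l0) (t, y))))%C) x) by (intro; apply By12).
rewrite (Dc_ext _ (fun t => (RtoC l * (Cconj (phi (x, t)) * RtoC (/ confac (- l0) (x, t))))%C) y) by (intro; apply Bx12).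
rewrite (Dc_shape1 _ _ _ _ _ (exD_conj _ _ Hpx) (der_h1x _ _ _ Hc)).
rewrite (Dc_shape1 _ _ _ _ _ (exD_conj _ _ Hpy) (der_h1y _ _ _ Hc)).
rewrite !Dc_conj.
rewrite Bx12, By11, Bx22, By12, Bx11, By22.
unfold V, wedge, csub, cadd, copp, fmul, dfun, rform, coframe, dz, z; simpl fdx; simpl fdy.
change (px phi (x, y)) with (Dc (fun t => phi (t, y)) x).
change (py phi (x, y)) with (Dc (fun t => phi (x, t)) y).
simpl Re; simpl Im.
generalize (Dc (fun t => phi (t, y)) x) (Dc (fun t => phi (x, t)) y) (phi (x, y)).
intros [p1 q1] [p2 q2] [p q].
rewrite !confac_eq.
assert (Hc2 : 1 + - l0 * (x * x + y * y) <> 0) by (replace (x*x+y*y) with (x^2+y^2) by ring; auto).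
apply injective_projections; simpl; field; auto.
Qed.

Lemma E11_val : m11 (M2add (dM B z) (wedgeM B B z)) = (Ci / 2 * W)%C.
Proof.
rewrite E11_expand. unfold B, z; simpl Re; simpl Im.
rewrite (Dc_ext _ (fun t => (Ci / 2 * (RtoC (ay (t, y)) + RtoC (2 * - l0) * RtoC (t * / confac (- l0) (t, y))))%C) x) by (intro; apply By11).
rewrite (Dc_ext _ (fun t => (Ci / 2 * (RtoC (ax (x, t)) + RtoC (-2 * - l0) * RtoC (t * / confac (- l0) (x, t))))%C) y) by (intro; apply Bx11).
rewrite (Dc_shape2 _ _ _ _ _ _ Hay (der_hxx _ _ _ Hc)).
rewrite (Dc_shape2 _ _ _ _ _ _ Hax (der_hyy _ _ _ Hc)).
rewrite Bx11, By11, Bx12, By21, By12, Bx21.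
unfold W, Defs.d1, kahler, wedge, cconj, fmul, rform, coframe, dz, z; simpl fdx; simpl fdy.
change (px (fun z => RtoC (ay z)) (x, y)) with (Dc (fun t => RtoC (ay (t, y))) x).
change (py (fun z => RtoC (ax z)) (x, y)) with (Dc (fun t => RtoC (ax (x, t))) y).
simpl Re; simpl Im.
generalize (Dc (fun t => RtoC (ay (t, y))) x) (Dc (fun t => RtoC (ax (x, t))) y) (phi (x, y)).
intros [p1 q1] [p2 q2] [p q].
rewrite !confac_eq, Cmod2.
assert (Hc2 : 1 + - l0 * (x * x + y * y) <> 0) by (replace (x*x+y*y) with (x^2+y^2) by ring; auto).
apply injective_projections; simpl; field; auto.
Qed.

Lemma E22_val : m22 (M2add (dM B z) (wedgeM B B z)) = (- (Ci / 2 * W))%C.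
Proof.
rewrite E22_expand. unfold B, z; simpl Re; simpl Im.
rewrite (Dc_ext _ (fun t => (- (Ci / 2) * (RtoC (ay (t, y)) + RtoC (2 * - l0) * RtoC (t * / confac (- l0) (t, y))))%C) x) by (intro; rewrite By22; simpl; ring).
rewrite (Dc_ext _ (fun t => (- (Ci / 2) * (RtoC (ax (x, t)) + RtoC (-2 * - l0) * RtoC (t * / confac (- l0) (x, t))))%C) y) by (intro; rewrite Bx22; simpl; ring).
rewrite (Dc_shape2 _ _ _ _ _ _ Hay (der_hxx _ _ _ Hc)).
rewrite (Dc_shape2 _ _ _ _ _ _ Hax (der_hyy _ _ _ Hc)).
rewrite Bx22, By22, Bx21, By12, By21, Bx12.
unfold W, Defs.d1, kahler, wedge, cconj, fmul, rform, coframe, dz, z; simpl fdx; simpl fdy.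
change (px (fun z => RtoC (ay z)) (x, y)) with (Dc (fun t => RtoC (ay (t, y))) x).
change (py (fun z => RtoC (ax z)) (x, y)) with (Dc (fun t => RtoC (ax (x, t))) y).
simpl Re; simpl Im.
generalize (Dc (fun t => RtoC (ay (t, y))) x) (Dc (fun t => RtoC (ax (x, t))) y) (phi (x, y)).
intros [p1 q1] [p2 q2] [p q].
rewrite !confac_eq, Cmod2.
assert (Hc2 : 1 + - l0 * (x * x + y * y) <> 0) by (replace (x*x+y*y) with (x^2+y^2) by ring; auto).
apply injective_projections; simpl; field; auto.
Qed.
End Main.

Lemma t0_eq l : t0 l = mkM2 (0, -1/2) (0,0) (0,0) (0, 1/2).
Proof. unfold t0, M2scal; simpl. f_equal; apply injective_projections; simpl; field. Qed.
Lemma tminus_eq l : tminus l = mkM2 (0,0) (0,0) (0,-1) (0,0).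
Proof. unfold tminus, t1, t2, M2sub, M2add, M2opp, M2scal; simpl. f_equal; apply injective_projections; simpl; field. Qed.
Lemma tplus_eq l : tplus l = mkM2 (0,0) (0,l) (0,0) (0,0).
Proof. unfold tplus, t1, t2, M2add, M2scal; simpl. f_equal; apply injective_projections; simpl; field. Qed.
Lemma Ci2 : (Ci / 2)%C = (0, 1/2).
Proof. apply injective_projections; simpl; field. Qed.

Lemma part1 l0 l (U0 : C -> Prop) (f : C -> C) (phi : C -> C) (a : cform) :
     cform_eq_on U0 (pull f (coframe (- l))) (fmul phi (coframe (- l0))) ->
     cform_eq_on U0 a (csub (pull f (spin (- l))) (spin (- l0))) ->
     mform_eq_on U0 (pullM f (Ahat l)) (vortex_conn l0 l a phi).
Proof.
intros H1 H2 z Hz. destruct (H1 z Hz) as [H1x H1y]. destruct (H2 z Hz) as [H2x H2y].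
clear H1 H2.
unfold pull, fmul, csub, cadd, copp in *. cbn -[coframe spin] in *.
unfold pullM, Ahat, vortex_conn, madd, mscal, msub, ftimesM, fmul, cadd, copp, cconj.
cbn -[coframe spin t0 tminus tplus Cdiv].
rewrite !t0_eq, !tminus_eq, !tplus_eq, !Ci2.
revert H1x H1y H2x H2y.
generalize (fdx (coframe (- l)) (f z)) (fdy (coframe (- l)) (f z)) (fdx (spin (- l)) (f z)) (fdy (spin (- l)) (f z))
  (fdx (coframe (- l0)) z) (fdy (coframe (- l0)) z) (fdx (spin (- l0)) z) (fdy (spin (- l0)) z)
  (fdx a z) (fdy a z) (phi z) (Re (px f z)) (Im (px f z)) (Re (py f z)) (Im (py f z)).
intros [ex1 ex2] [ey1 ey2] [gx1 gx2] [gy1 gy2] [e0x1 e0x2] [e0y1 e0y2] [g0x1 g0x2] [g0y1 g0y2]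
  [ax1 ax2] [ay1 ay2] [p q] r1 r2 s1 s2.
intros H1x H1y H2x H2y.
injection H1x; injection H1y; injection H2x; injection H2y; intros.
pose proof (f_equal (Rmult l) H3); pose proof (f_equal (Rmult l) H4); pose proof (f_equal (Rmult l) H5); pose proof (f_equal (Rmult l) H6).
unfold M2add, M2scal; simpl.
split; f_equal; apply injective_projections; simpl. all: lra.
Qed.

Lemma half0 (v : C) : (v / 2 = 0)%C -> v = 0%C.
Proof. intro H. replace v with (2 * (v / 2))%C.
- rewrite H. ring.
- destruct v as [a b]. apply injective_projections; simpl; field.
Qed.
Lemma ci2_0 (v : C) : (Ci / 2 * v = 0)%C -> v = 0%C.
Proof. intro H. replace v with ((-2 * Ci) * (Ci / 2 * v))%C.
- rewrite H. ring.
- destruct v as [a b]. apply injective_projections; simpl; field.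
Qed.
Lemma Csub0 (u v : C) : (u - v = 0)%C -> u = v.
Proof. intro H. replace u with ((u - v) + v)%C by ring. rewrite H. ring. Qed.
Lemma Csubxx (u : C) : (u - u = 0)%C.
Proof. ring. Qed.
Lemma M2_eta (M : M2) : M = mkM2 (m11 M) (m12 M) (m21 M) (m22 M).
Proof. destruct M; reflexivity. Qed.

Theorem corollary3p2 :
  forall (l0 l : R), unit_val l0 -> unit_val l ->
  forall (U0 U : C -> Prop),
    open U0 -> (forall z, U0 z -> 0 < confac (- l0) z) ->
    open U -> (forall w, U w -> 0 < confac (- l) w) ->
  (* part 1: pullback of A-hat *)
  (forall (f : C -> C), holomorphic_on U0 f -> (forall z, U0 z -> U (f z)) ->
   forall (phi : C -> C) (a : cform),
     cform_eq_on U0 (pull f (coframe (- l))) (fmul phi (coframe (- l0))) ->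
     cform_eq_on U0 a (csub (pull f (spin (- l))) (spin (- l0))) ->
     mform_eq_on U0 (pullM f (Ahat l)) (vortex_conn l0 l a phi))
  /\
  (* part 2: flatness <-> vortex equations *)
  (forall (phi : C -> C) (ax ay : C -> R),
     has_partials_on U0 phi ->
     has_partials_on U0 (fun z => RtoC (ax z)) ->
     has_partials_on U0 (fun z => RtoC (ay z)) ->
     (flat_on U0 (vortex_conn l0 l (rform ax ay) phi) <->
      vortex_eqs U0 l0 l phi (rform ax ay))).
Proof.
intros l0 l _ _ U0 U _ Hc0 _ _. split.
- intros f _ _ phi a H1 H2. exact (part1 l0 l U0 f phi a H1 H2).
- intros phi ax ay Hphi Hax Hay.
  assert (Key : forall z, U0 z -> exists x y, z = (x, y) /\
     1 + - l0 * (x^2 + y^2) <> 0 /\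
     exD (fun t => phi (t, y)) x /\ exD (fun t => phi (x, t)) y /\
     exD (fun t => RtoC (ay (t, y))) x /\ exD (fun t => RtoC (ax (x, t))) y).
  { intros [x y] Hz. exists x, y. split; [reflexivity|].
    pose proof (Hc0 _ Hz) as Hc. rewrite confac_eq in Hc.
    destruct (Hphi _ Hz) as [p1 [p2 [p3 p4]]].
    destruct (Hax _ Hz) as [a1 [a2 [a3 a4]]].
    destruct (Hay _ Hz) as [b1 [b2 [b3 b4]]].
    repeat split; try lra; assumption. }
  split.
  + intros Hflat z Hz. destruct (Key z Hz) as [x [y [-> [Hne [Hpx [Hpy [Hy Hx]]]]]]].
    specialize (Hflat _ Hz).
    pose proof (f_equal m21 Hflat) as E21. pose proof (f_equal m11 Hflat) as E11.
    unfold M2zero in E21, E11; cbn [m21 m11] in E21, E11.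
    rewrite E21_val in E21 by assumption. rewrite E11_val in E11 by assumption.
    split.
    * exact (half0 _ E21).
    * apply Csub0. exact (ci2_0 _ E11).
  + intros Hv z Hz. destruct (Key z Hz) as [x [y [-> [Hne [Hpx [Hpy [Hy Hx]]]]]]].
    destruct (Hv _ Hz) as [HV HW].
    rewrite (M2_eta (M2add _ _)).
    rewrite E11_val, E12_val, E21_val, E22_val by assumption.
    rewrite HV, HW, Csubxx. unfold M2zero.
    f_equal; apply injective_projections; simpl; field.
Qed.
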